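(* If $n,m\ge 2$, then the LC orbit of the complete bipartite graph $K_{n,m}$ has size $|\mathcal{O}(K_{n,m})|=nm+n+m+3$.
   Context: For a graph $G$ and vertex $v$, the local complement $c_v(G)$ is the graph on $V(G)$ obtained by complementing the edges among the neighbours of $v$. $\mathcal{O}(G)$ is the set of all graphs on the labelled vertex set $V(G)$ obtainable from $G$ by finite sequences of local complements; graphs are labelled, so isomorphic but distinct graphs are counted separately. *)

(* Defs.v *)
From mathcomp Require Import all_boot.
Set Implicit Arguments. Unset Strict Implicit. Unset Printing Implicit Defensive.

Definition graph (V : finType) := {ffun V -> {ffun V -> bool}}.

Definition simple_graph (V : finType) (G : graph V) : bool :=
  [forall x, ~~ G x x] && [forall x, forall y, G x y == G y x].

Definition local_complement (V : finType) (v : V) (G : graph V) : graph V :=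
  [ffun x => [ffun y =>
     if (x != y) && G v x && G v y then ~~ G x y else G x y]].

Definition lc_step (V : finType) : rel (graph V) :=
  fun G H => [exists v, H == local_complement v G].

Definition lc_orbit (V : finType) (G : graph V) : {set graph V} :=
  [set H | connect (@lc_step V) G H].

Definition Kbip (n m : nat) : graph ('I_n + 'I_m)%type :=
  [ffun x => [ffun y =>
     match x, y with
     | inl _, inr _ => true
     | inr _, inl _ => true
     | _, _ => false
     end]].

(* Main.v *)
Require Import Defs.
From mathcomp Require Import all_boot zify.
Set Implicit Arguments. Unset Strict Implicit. Unset Printing Implicit Defensive.

Section S.
Variables n m : nat.
Notation V := ('I_n + 'I_m)%type.
Definition code := ((((unit + unit) + unit) + ('I_n + 'I_m)) + ('I_n * 'I_m))%type.
Definition cK : code := inl (inl (inl (inl tt))).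
Definition cKA : code := inl (inl (inl (inr tt))).
Definition cKB : code := inl (inl (inr tt)).
Definition cSA a : code := inl (inr (inl a)).
Definition cSB b : code := inl (inr (inr b)).
Definition cD a b : code := inr (a, b).

Definition adj (c : code) (x y : V) : bool :=
  match c with
  | inl (inl (inl (inl _))) =>
      match x, y with inl _, inr _ | inr _, inl _ => true | _, _ => false end
  | inl (inl (inl (inr _))) =>
      match x, y with inl i, inl j => i != j | inr _, inr _ => false | _, _ => true end
  | inl (inl (inr _)) =>
      match x, y with inl _, inl _ => false | inr i, inr j => i != j | _, _ => true end
  | inl (inr (inl a)) =>
      match x, y with
      | inl i, inl j => (i != j) && ((i == a) || (j == a))
      | inl i, inr _ => i == a
      | inr _, inl j => j == a
      | inr i, inr j => i != j end
  | inl (inr (inr b)) =>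
      match x, y with
      | inl i, inl j => i != j
      | inl _, inr j => j == b
      | inr i, inl _ => i == b
      | inr i, inr j => (i != j) && ((i == b) || (j == b)) end
  | inr (a, b) =>
      match x, y with
      | inl i, inl j => (i != j) && ((i == a) || (j == a))
      | inl i, inr j => (i == a) && (j == b)
      | inr i, inl j => (i == b) && (j == a)
      | inr i, inr j => (i != j) && ((i == b) || (j == b)) end
  end.

Definition gr (c : code) : graph V := [ffun x => [ffun y => adj c x y]].

Definition next (c : code) (v : V) : code :=
  match c, v with
  | inl (inl (inl (inl _))), inl _ => cKB
  | inl (inl (inl (inl _))), inr _ => cKA
  | inl (inl (inl (inr _))), inl k => cSA k
  | inl (inl (inl (inr _))), inr _ => cK
  | inl (inl (inr _)), inl _ => cK
  | inl (inl (inr _)), inr k => cSB k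
  | inl (inr (inl a)), inl k => if k == a then cKA else cSA a
  | inl (inr (inl a)), inr k => cD a k
  | inl (inr (inr b)), inl k => cD k b
  | inl (inr (inr b)), inr k => if k == b then cKB else cSB b
  | inr (a, b), inl k => if k == a then cSB b else cD a b
  | inr (a, b), inr k => if k == b then cSA a else cD a b
  end.

Lemma eqLL (A B : eqType) (i j : A) : (@inl A B i == inl j) = (i == j). Proof. by []. Qed.
Lemma eqRR (A B : eqType) (i j : B) : (@inr A B i == inr j) = (i == j). Proof. by []. Qed.
Lemma eqLR (A B : eqType) (i : A) (j : B) : (inl i == inr j) = false. Proof. by []. Qed.
Lemma eqRL (A B : eqType) (i : A) (j : B) : (inr j == inl i) = false. Proof. by []. Qed.
Ltac bf := repeat (rewrite ?eqLL ?eqRR ?eqLR ?eqRL /cK /cKA /cKB /cSA /cSB /cD /=; try done; match goal with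
 | H : ?x <> ?x |- _ => by case: H
 | |- context[?x == ?x] => rewrite eqxx
 | |- context[?x == ?y] => case: (x =P y) => [?|?]; subst
 end).

Lemma lc_next c v : local_complement v (gr c) = gr (next c v).
Proof.
apply/ffunP => x; apply/ffunP => y; rewrite !ffunE.
case: c => [[[[[]|[]]|[]]|[a|b]]|[a b]]; case: v => k; case: x => i; case: y => j; rewrite /next /=; bf.
Qed.

Section Inj.
Variables (a0 a1 : 'I_n) (b0 b1 : 'I_m).
Hypotheses (ha : a0 != a1) (hb : b0 != b1).

Ltac pts E c :=
  match c with
  | inl (inr (inl ?a)) => move: (E (inl a) (inr b0)) (E (inl a) (inr b1))
  | inl (inr (inr ?b)) => move: (E (inl a0) (inr b)) (E (inl a1) (inr b))
  | inr (?a, ?b) => move: (E (inl a) (inr b))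
  | _ => idtac
  end.

Lemma gr_inj : injective gr.
Proof.
move=> c1 c2 H.
have E x y : adj c1 x y = adj c2 x y.
  by move/ffunP: H => /(_ x) /ffunP /(_ y); rewrite !ffunE.
move: (E (inl a0) (inl a1)) (E (inr b0) (inr b1)) (E (inl a0) (inr b0)) (E (inl a0) (inr b1))
  (E (inl a1) (inr b0)) (E (inl a1) (inr b1)).
move: ha hb; clear H.
case: c1 E => [[[[[]|[]]|[]]|[a|b]]|[a b]] E; case: c2 E => [[[[[]|[]]|[]]|[a'|b']]|[a' b']] E;
match goal with |- context [@eq code ?l ?r] => pts E l; pts E r end; bf.
Qed.
End Inj.
End S.

Lemma Kbip_gr n m : Kbip n m = gr (cK n m).
Proof. by apply/ffunP => x; apply/ffunP => y; rewrite !ffunE; case: x; case: y. Qed.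

Lemma step n m (c : code n m) v : lc_step (gr c) (gr (next c v)).
Proof. by apply/existsP; exists v; rewrite lc_next. Qed.

Theorem theorem4 (n m : nat) (hn : 2 <= n) (hm : 2 <= m) :
  #|lc_orbit (Kbip n m)| = n * m + n + m + 3.
Proof.
have h0n : 0 < n by lia. have h1n : 1 < n by lia.
have h0m : 0 < m by lia. have h1m : 1 < m by lia.
pose a0 := Ordinal h0n. pose a1 := Ordinal h1n.
pose b0 := Ordinal h0m. pose b1 := Ordinal h1m.
have ha : a0 != a1 by []. have hb : b0 != b1 by [].
have -> : lc_orbit (Kbip n m) = [set gr c | c in [set: code n m]].
  apply/setP => G; rewrite /lc_orbit inE Kbip_gr; apply/idP/idP.
  - case/connectP => p Hp ->.
    elim: p (cK n m) Hp => [|x p IH] c /=.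
      by move=> _; apply/imsetP; exists c; rewrite ?inE.
    case/andP => /existsP [v /eqP ->]; rewrite lc_next; exact: IH.
  - case/imsetP => c _ ->.
    have KA : connect (@lc_step _) (gr (cK n m)) (gr (cKA n m)).
      exact: (connect1 (step (cK n m) (inr b0))).
    have KB : connect (@lc_step _) (gr (cK n m)) (gr (cKB n m)).
      exact: (connect1 (step (cK n m) (inl a0))).
    have SA a : connect (@lc_step _) (gr (cK n m)) (gr (cSA m a)).
      exact: (connect_trans KA (connect1 (step (cKA n m) (inl a)))).
    have SB b : connect (@lc_step _) (gr (cK n m)) (gr (cSB n b)).
      exact: (connect_trans KB (connect1 (step (cKB n m) (inr b)))).
    case: c => [[[[[]|[]]|[]]|[a|b]]|[a b]] //.
    + exact: SA.
    + exact: SB.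
    + exact: (connect_trans (SA a) (connect1 (step (cSA m a) (inr b)))).
rewrite card_imset; last exact: (gr_inj ha hb).
rewrite cardsT !card_sum card_prod !card_unit !card_ord; lia.
Qed.
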